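(* Let $s$ and $l$ be two positive integers. Let $p$ be an odd prime such that $p\ge l+2$ and $p-1$ divides none of $sl$ and $ks+1$ for $k=1,\dots,l$. Then the homogeneous multiple harmonic sum satisfies $$H(\{s\}^l; p-1)\equiv S(\{s\}^l; p-1)\equiv 0 \pmod{p^{\mathrm{par}(ls-1)}}.$$ In particular, if $p\ge ls+3$ then the congruence $H(\{s\}^l; p-1)\equiv S(\{s\}^l; p-1)\equiv 0 \pmod{p^{\mathrm{par}(ls-1)}}$ always holds, and so $p\mid H(\{s\}^l; p-1)$.
   Context: For positive integers $s_1,\dots,s_l$ and $n\ge 0$, $H(s_1,\dots,s_l;n)=\sum_{1\le k_1<\dots<k_l\le n} k_1^{-s_1}\cdots k_l^{-s_l}$ and $S(s_1,\dots,s_l;n)=\sum_{1\le k_1\le \dots\le k_l\le n} k_1^{-s_1}\cdots k_l^{-s_l}$. The notation $\{s\}^l$ denotes the sequence $(s,\dots,s)$ with $s$ repeated $l$ times. $\mathrm{par}(m)$ denotes the parity of $m$: it equals $1$ if $m$ is odd and $2$ if $m$ is even. *)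

(* Defs.v *)
From mathcomp Require Import all_boot all_order all_algebra.
Set Implicit Arguments. Unset Strict Implicit. Unset Printing Implicit Defensive.
Import Order.TTheory GRing.Theory Num.Theory.
Local Open Scope ring_scope.

(* Multiple harmonic sum H(s_1,...,s_l; n) = sum_{1<=k_1<...<k_l<=n} prod k_i^{-s_i},
   indices k : 'I_l -> 'I_(n+1) (values 0..n), required to be >= 1. *)
Definition mhsH (ss : seq nat) (n : nat) : rat :=
  \sum_(k : {ffun 'I_(size ss) -> 'I_n.+1} |
         [forall i : 'I_(size ss), 0 < (k i : nat)]%N &&
         [forall i : 'I_(size ss), forall j : 'I_(size ss), (i < j)%N ==> (k i < k j)%N])
    \prod_(i < size ss) (((k i : nat)%:R : rat) ^- (nth 0%N ss i)).

Definition mhsS (ss : seq nat) (n : nat) : rat :=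
  \sum_(k : {ffun 'I_(size ss) -> 'I_n.+1} |
         [forall i : 'I_(size ss), 0 < (k i : nat)]%N &&
         [forall i : 'I_(size ss), forall j : 'I_(size ss), (i < j)%N ==> (k i <= k j)%N])
    \prod_(i < size ss) (((k i : nat)%:R : rat) ^- (nth 0%N ss i)).

Definition par (m : nat) : nat := if odd m then 1%N else 2%N.

Definition cong0_mod (x : rat) (p e : nat) : Prop :=
  exists (a : int) (b : nat),
    [/\ (0 < b)%N, coprime b p, ((p ^ e)%:Z %| a)%Z & x = a%:~R / b%:R].

(* Main.v *)
Require Import Defs.
From mathcomp Require Import all_boot all_order all_algebra.
From mathcomp Require Import all_fingroup all_solvable all_field ring zify.
Set Implicit Arguments. Unset Strict Implicit. Unset Printing Implicit Defensive.
Import Order.TTheory GRing.Theory Num.Theory.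

Fixpoint famL (m n : nat) : seq (seq nat) :=
  match n with
  | 0 => if m is 0 then [:: [::]] else [::]
  | n'.+1 => match m with
             | 0 => [:: [::]]
             | m'.+1 => famL m n' ++ map (cons n) (famL m' n')
             end
  end.

Fixpoint famM (n : nat) : nat -> seq (seq nat) :=
  match n with
  | 0 => fun m => if m is 0 then [:: [::]] else [::]
  | n'.+1 => fix g m := match m with
             | 0 => [:: [::]]
             | m'.+1 => famM n' m ++ map (cons n) (g m')
             end
  end.

Definition rng n := fun x => (0 < x <= n)%N.

Lemma mem_famL m n t : (t \in famL m n) =
  [&& size t == m, sorted (fun x y => y < x)%N t & all (rng n) t].
Proof.
elim: n m t => [|n IH] [|m] [|x t] //=.
- by rewrite in_nil /rng; case: x => //= *; rewrite !andbF.
- rewrite mem_cat IH /=; apply/negbTE/negP; case/mapP=> ? _ //.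
rewrite mem_cat IH; apply/orP/idP.
  case=> [/and3P[/= -> -> /andP[rx atl]] | /mapP[t' t'in [-> ->]]].
    rewrite /=; apply/andP; split.
      by move: rx; rewrite /rng => /andP[-> /= xn]; exact: leqW.
    apply/allP=> y yt; move/allP: atl => /(_ y yt); rewrite /rng => /andP[-> /= yn]; exact: leqW.
  move: t'in; rewrite IH => /and3P[/eqP-> st atl] /=.
  rewrite eqxx /rng /= leqnn /=.
  apply/andP; split; last first.
    by apply/allP=> y yt; move/allP: atl => /(_ y yt)/andP[-> /= ?]; exact: leqW.
  case: t' st atl => //= y t' -> /andP[/andP[_ yn] _]; by rewrite andbT ltnS.
case/and4P=> sz st rx atl.
have allx : all (fun y => y < x)%N t.
  by apply: order_path_min st => a b c ba cb; exact: ltn_trans ba.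
case/andP: rx => x0; rewrite leq_eqVlt => /orP[/eqP ex | xn].
  right; apply/mapP; exists t; last by rewrite ex.
  rewrite IH -(eqSS (size t)) sz /=.
  have -> : sorted (fun x y => y < x)%N t by case: t {sz allx atl} st => //= y t /andP[].
  apply/allP=> y yt; rewrite /rng; move/allP: atl => /(_ y yt) /andP[-> _] /=.
  by move/allP: allx => /(_ y yt); rewrite ex ltnS.
left; rewrite /= sz st /rng x0 /= -ltnS xn /=.
apply/allP=> y yt; move/allP: atl => /(_ y yt) /andP[-> _] /=.
move/allP: allx => /(_ y yt) yx; rewrite -ltnS; exact: ltn_trans yx xn.
Qed.

Lemma mem_famM m n t : (t \in famM n m) =
  [&& size t == m, sorted (fun x y => y <= x)%N t & all (rng n) t].
Proof.
elim: n m t => [|n IH] m t.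
  case: m t => [|m] [|x t] //=; rewrite ?in_nil ?inE //.
  by rewrite /rng; case: x => //= *; rewrite !andbF.
elim: m t => [|m IHm] [|x t] //=.
- by rewrite mem_cat IH /=; apply/negbTE/negP; case/mapP=> ? _ //.
rewrite mem_cat IH; apply/orP/idP.
  case=> [/and3P[/= -> -> /andP[rx atl]] | /mapP[t' t'in [-> ->]]].
    rewrite /=; apply/andP; split.
      by move: rx; rewrite /rng => /andP[-> /= xn]; exact: leqW.
    apply/allP=> y yt; move/allP: atl => /(_ y yt); rewrite /rng => /andP[-> /= yn]; exact: leqW.
  move: t'in; rewrite IHm => /and3P[/eqP-> st atl] /=.
  rewrite eqxx /rng /= leqnn /=.
  apply/andP; split; last by [].
  case: t' st atl => //= y t' -> /andP[/andP[_ yn] _]; by rewrite andbT.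
case/and4P=> sz st rx atl.
have allx : all (fun y => y <= x)%N t.
  by apply: order_path_min st => a b c ba cb; exact: leq_trans cb ba.
case/andP: rx => x0; rewrite leq_eqVlt => /orP[/eqP ex | xn].
  right; apply/mapP; exists t; last by rewrite ex.
  rewrite IHm -(eqSS (size t)) sz /=.
  have -> : sorted (fun x y => y <= x)%N t by case: t {sz allx atl} st => //= y t /andP[].
  exact: atl.
left; rewrite /= sz st /rng x0 /= -ltnS xn /=.
apply/allP=> y yt; move/allP: atl => /(_ y yt) /andP[-> _] /=.
move/allP: allx => /(_ y yt) yx; rewrite -ltnS; exact: leq_ltn_trans yx xn.
Qed.

Lemma cons_inj (x : nat) : injective (cons x).
Proof. by move=> a b []. Qed.

Lemma uniq_famL m n : uniq (famL m n).
Proof.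
elim: n m => [|n IH] [|m] //=.
rewrite cat_uniq IH (map_inj_uniq (@cons_inj _)) IH andbT /=.
apply/hasPn=> t /mapP[t' _ ->]; rewrite mem_famL /= /rng ltnn.
by rewrite !andbF.
Qed.

Lemma uniq_famM m n : uniq (famM n m).
Proof.
elim: n m => [|n IH] m; first by case: m.
elim: m => [|m IHm] //=.
rewrite cat_uniq IH (map_inj_uniq (@cons_inj _)) IHm andbT /=.
apply/hasPn=> t /mapP[t' _ ->]; rewrite mem_famM /= /rng ltnn.
by rewrite !andbF.
Qed.


Local Open Scope ring_scope.

Lemma link (R : comRingType) (r : rel nat) (fam : seq (seq nat)) m n (F : nat -> R) :
  transitive r -> uniq fam ->
  (forall t, (t \in fam) = [&& size t == m, sorted (fun x y => r y x) t & all (rng n) t]) ->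
  \sum_(k : {ffun 'I_m -> 'I_n.+1} | [forall i : 'I_m, 0 < (k i : nat)]%N &&
         [forall i : 'I_m, forall j : 'I_m, (i < j)%N ==> r (k i) (k j)])
    \prod_(i < m) F (k i) = \sum_(t <- fam) \prod_(x <- t) F x.
Proof.
move=> rtr ufam memf.
pose phi (k : {ffun 'I_m -> 'I_n.+1}) := rev [seq (k i : nat) | i <- enum 'I_m].
have Ephi (k : {ffun 'I_m -> 'I_n.+1}) : \prod_(i < m) F (k i) = \prod_(x <- phi k) F x.
  by rewrite big_rev big_map enumT.
under eq_bigr do rewrite Ephi.
rewrite -big_enum -(big_map phi xpredT (fun t => \prod_(x <- t) F x)).
apply: perm_big; apply: uniq_perm => //.
  rewrite map_inj_in_uniq ?enum_uniq // => k1 k2 _ _ /(congr1 rev); rewrite !revK.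
  move=> e; apply/ffunP=> i; apply: ord_inj.
  have E : nth i (enum 'I_m) i = i := nth_ord_enum i i.
  have h (k : {ffun 'I_m -> 'I_n.+1}) : nth 0%N [seq (k i : nat) | i <- enum 'I_m] i = k i.
    by rewrite (nth_map i) ?size_enum_ord // E.
  by rewrite -!h e.
move=> t; rewrite memf; apply/mapP/idP.
  case=> k; rewrite mem_enum => /andP[/forallP kpos /forallP kinc] ->.
  rewrite /phi size_rev size_map size_enum_ord eqxx /=.
  apply/andP; split.
    rewrite rev_sorted sorted_map.
    have : sorted (relpre val ltn) (enum 'I_m) by rewrite -sorted_map val_enum_ord iota_ltn_sorted.
    apply: sub_sorted => i j /= ij; by move: (kinc i) => /forallP /(_ j) /implyP /(_ ij).
  rewrite all_rev; apply/allP=> x /mapP[i _ ->]; rewrite /rng kpos /=.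
  by rewrite -ltnS ltn_ord.
case/and3P=> /eqP szt st atl.
have srt : sorted r (rev t).
  by rewrite rev_sorted.
have inr y : y \in t -> (y <= n)%N.
  by move=> yt; move/allP: atl => /(_ y yt) /andP[].
have memt q : (q < m)%N -> nth 0%N (rev t) q \in t.
  by move=> qm; rewrite -mem_rev mem_nth // size_rev szt.
exists [ffun i : 'I_m => inord (nth 0%N (rev t) i)].
  rewrite mem_enum; apply/andP; split.
    apply/forallP=> i; rewrite ffunE inordK; last first.
      rewrite ltnS inr // -mem_rev mem_nth // size_rev szt //.
    have : nth 0%N (rev t) i \in t by rewrite -mem_rev mem_nth // size_rev szt.
    by move=> /(allP atl) /andP[].

  apply/forallP=> i; apply/forallP=> j; apply/implyP=> ij.
  rewrite !ffunE !inordK ?ltnS ?inr ?memt //.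
  apply: (sorted_ltn_nth rtr 0%N srt); rewrite ?inE ?size_rev ?szt //.
rewrite /phi; apply: (canRL revK).
apply: (@eq_from_nth _ 0%N); first by rewrite size_map size_enum_ord size_rev szt.
move=> i; rewrite size_rev szt => im.
rewrite (nth_map (Ordinal im)) ?size_enum_ord // ffunE inordK.
  by rewrite nth_enum_ord.
by rewrite ltnS inr // -mem_rev mem_nth // size_rev szt nth_enum_ord.
Qed.


Local Open Scope ring_scope.

Definition genE (R : comRingType) (v : R) : {poly R} := 1 + v%:P * 'X.
Definition genH (R : comRingType) (K : nat) (v : R) : {poly R} := \poly_(j < K.+1) (v ^+ j).

Lemma coef_genE (R : comRingType) (P : {poly R}) c i :
  (P * genE c)`_i = P`_i + (if i is i'.+1 then c * P`_i' else 0).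
Proof.
rewrite /genE mulrDr mulr1 coefD mulrCA coefCM coefMX.
by case: i => [|i] /=; rewrite ?mulr0.
Qed.

Lemma coef_genH (R : comRingType) (P : {poly R}) K c i : (i <= K)%N ->
  (P * genH K c)`_i = \sum_(j < i.+1) P`_j * c ^+ (i - j).
Proof.
move=> iK; rewrite coefM; apply: eq_bigr => j _; rewrite coef_poly.
by rewrite ltnS (leq_trans (leq_subr _ _) iK).
Qed.

Lemma famL0 n : famL 0 n = [:: [::]]. Proof. by case: n. Qed.
Lemma famLS0 m : famL m.+1 0 = [::]. Proof. by []. Qed.
Lemma famLS m n : famL m.+1 n.+1 = famL m.+1 n ++ map (cons n.+1) (famL m n).
Proof. by []. Qed.
Lemma famM0 n : famM n 0 = [:: [::]]. Proof. by case: n. Qed.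
Lemma famMS0 m : famM 0 m.+1 = [::]. Proof. by []. Qed.
Lemma famMS m n : famM n.+1 m.+1 = famM n m.+1 ++ map (cons n.+1) (famM n.+1 m).
Proof. by []. Qed.

Lemma polyL (R : comRingType) (f : nat -> R) m n :
  \sum_(t <- famL m n) \prod_(x <- t) f x = (\prod_(1 <= k < n.+1) genE (f k))`_m.
Proof.
elim: n m => [|n IH] m.
  rewrite big_geq // coef1; case: m => [|m]; by rewrite ?famL0 ?famLS0 ?big_cons !big_nil ?addr0.
rewrite big_nat_recr // coef_genE; case: m => [|m].
  by rewrite -IH !famL0 big_cons !big_nil !addr0.
rewrite famLS big_cat big_map -!IH; congr (_ + _).
rewrite big_distrr; apply: eq_bigr => t _; by rewrite big_cons.
Qed.

Lemma polyM (R : comRingType) (f : nat -> R) K m n : (m <= K)%N ->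
  \sum_(t <- famM n m) \prod_(x <- t) f x = (\prod_(1 <= k < n.+1) genH K (f k))`_m.
Proof.
elim: n m => [|n IH] m mK.
  rewrite big_geq // coef1; case: m mK => [|m] _; by rewrite ?famM0 ?famMS0 ?big_cons !big_nil ?addr0.
rewrite big_nat_recr // coef_genH //.
elim: m mK => [|m IHm] mK.
  by rewrite big_ord1 -IH // !famM0 big_cons !big_nil !addr0 mulr1.
rewrite famMS big_cat big_map IH //.
have -> : \sum_(t <- famM n.+1 m) \prod_(x <- n.+1 :: t) f x =
    f n.+1 * \sum_(t <- famM n.+1 m) \prod_(x <- t) f x.
  by rewrite big_distrr; apply: eq_bigr => t _; rewrite big_cons.
rewrite IHm ?(ltnW mK) //.
rewrite [in RHS]big_ord_recr subnn expr0 mulr1 [RHS]addrC; congr (_ + _).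
rewrite big_distrr; apply: eq_bigr => j _.
rewrite subSn; last exact: ltn_ord j.
by rewrite exprS mulrCA.
Qed.

Lemma symL (R : comRingType) (f g : nat -> R) m n :
  perm_eq (map g (iota 1 n)) (map f (iota 1 n)) ->
  \sum_(t <- famL m n) \prod_(x <- t) g x = \sum_(t <- famL m n) \prod_(x <- t) f x.
Proof.
move=> pe; rewrite !polyL.
have E (h : nat -> R) : \prod_(1 <= k < n.+1) genE (h k) = \prod_(v <- map h (iota 1 n)) genE v.
  by rewrite big_map /index_iota subn1.
by rewrite !E (perm_big _ pe).
Qed.

Lemma symM (R : comRingType) (f g : nat -> R) m n :
  perm_eq (map g (iota 1 n)) (map f (iota 1 n)) ->
  \sum_(t <- famM n m) \prod_(x <- t) g x = \sum_(t <- famM n m) \prod_(x <- t) f x.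
Proof.
move=> pe; rewrite !(@polyM _ _ m) //.
have E (h : nat -> R) : \prod_(1 <= k < n.+1) genH m (h k) = \prod_(v <- map h (iota 1 n)) genH m v.
  by rewrite big_map /index_iota subn1.
by rewrite !E (perm_big _ pe).
Qed.

Definition goodfam (fam : nat -> nat -> seq (seq nat)) :=
  (forall (R : comRingType) (f g : nat -> R) m n,
    perm_eq (map g (iota 1 n)) (map f (iota 1 n)) ->
    \sum_(t <- fam m n) \prod_(x <- t) g x = \sum_(t <- fam m n) \prod_(x <- t) f x) /\
  (forall m n t, t \in fam m n -> size t = m) /\
  (forall m n t, t \in fam m n -> all (rng n) t).

Lemma goodL : goodfam famL.
Proof.
split; first by move=> *; exact: symL.
split; first by move=> m n t; rewrite mem_famL => /and3P[/eqP].
by move=> m n t; rewrite mem_famL => /and3P[].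
Qed.

Lemma goodM : goodfam (fun m n => famM n m).
Proof.
split; first by move=> *; exact: symM.
split; first by move=> m n t; rewrite mem_famM => /and3P[/eqP].
by move=> m n t; rewrite mem_famM => /and3P[].
Qed.

Local Open Scope ring_scope.

Fixpoint dsum (R : comRingType) (a b : nat -> R) (t : seq nat) : R :=
  match t with
  | [::] => 0
  | x :: t' => b x * \prod_(y <- t') a y + a x * dsum a b t'
  end.

Lemma eps_prod (R : comRingType) (e : R) (a b : nat -> R) t : e * e = 0 ->
  \prod_(x <- t) (a x + e * b x) = \prod_(x <- t) a x + e * dsum a b t.
Proof.
move=> ee; elim: t => [|x t IH]; first by rewrite !big_nil /= mulr0 addr0.
rewrite !big_cons IH /=.
set P := \prod_(y <- t) a y; set D := dsum a b t.
have -> : (a x + e * b x) * (P + e * D) =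
   a x * P + e * (b x * P + a x * D) + (e * e) * (b x * D) by ring.
by rewrite ee mul0r addr0.
Qed.

Lemma coef_lin (R : comRingType) (a b : nat -> R) t :
  (\prod_(x <- t) ((a x)%:P + (b x)%:P * 'X))`_0 = \prod_(x <- t) a x /\
  (\prod_(x <- t) ((a x)%:P + (b x)%:P * 'X))`_1 = dsum a b t.
Proof.
elim: t => [|x t [IH0 IH1]]; first by rewrite !big_nil !coef1.
rewrite !big_cons mulrDl -mulrA ['X * _]mulrC !coefD !coefCM !coefMX IH0 IH1.
by rewrite mulr0 addr0 /= addrC.
Qed.

Lemma prod_scale (R : comRingType) (c : R) (a : nat -> R) t :
  \prod_(x <- t) (c * a x) = c ^+ size t * \prod_(x <- t) a x.
Proof.
elim: t => [|x t IH]; first by rewrite !big_nil mulr1.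
by rewrite !big_cons IH /= exprS; ring.
Qed.

Lemma dsum_scale (R : comRingType) (c d : R) (a b : nat -> R) t :
  dsum (fun x => c * a x) (fun x => d * b x) t = c ^+ (size t).-1 * d * dsum a b t.
Proof.
elim: t => [|x t IH] /=; first by rewrite mulr0.
rewrite prod_scale IH; case: t IH => [|y t] IH /=; first by rewrite !mulr0 !addr0 big_nil; ring.
rewrite exprS; ring.
Qed.

Lemma eq_dsum (R : comRingType) (a a' b b' : nat -> R) t :
  a =1 a' -> b =1 b' -> dsum a b t = dsum a' b' t.
Proof.
move=> ea eb; elim: t => [|x t IH] //=.
by rewrite IH ea eb (eq_bigr _ (fun y _ => ea y)).
Qed.

Lemma rmorph_dsum (R S : comRingType) (phi : {rmorphism R -> S}) (a b : nat -> R) t :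
  phi (dsum a b t) = dsum (fun x => phi (a x)) (fun x => phi (b x)) t.
Proof.
elim: t => [|x t IH] /=; first by rewrite rmorph0.
by rewrite rmorphD !rmorphM rmorph_prod IH.
Qed.

Lemma coef_lin0 (R : comRingType) (a b : nat -> R) t :
  (\prod_(x <- t) ((a x)%:P + (b x)%:P * 'X))`_0 = \prod_(x <- t) a x.
Proof. exact: (coef_lin a b t).1. Qed.

Lemma coef_lin1 (R : comRingType) (a b : nat -> R) t :
  (\prod_(x <- t) ((a x)%:P + (b x)%:P * 'X))`_1 = dsum a b t.
Proof. exact: (coef_lin a b t).2. Qed.

Lemma coef_lin0' (R : comRingType) (a b : nat -> R) (G : nat -> {poly R}) t :
  (forall x, G x = (a x)%:P + (b x)%:P * 'X) ->
  (\prod_(x <- t) G x)`_0 = \prod_(x <- t) a x.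
Proof. by move=> e; rewrite (eq_bigr _ (fun x _ => e x)) coef_lin0. Qed.

Lemma coef_lin1' (R : comRingType) (a b : nat -> R) (G : nat -> {poly R}) t :
  (forall x, G x = (a x)%:P + (b x)%:P * 'X) ->
  (\prod_(x <- t) G x)`_1 = dsum a b t.
Proof. by move=> e; rewrite (eq_bigr _ (fun x _ => e x)) coef_lin1. Qed.

Lemma eq_dsum_in (R : comRingType) (a a' b b' : nat -> R) t :
  {in t, a =1 a'} -> {in t, b =1 b'} -> dsum a b t = dsum a' b' t.
Proof.
elim: t => [|x t IH] //= ea eb.
rewrite IH; last 2 first.
- by move=> y yt; apply: ea; rewrite inE yt orbT.
- by move=> y yt; apply: eb; rewrite inE yt orbT.
rewrite ea ?eb ?mem_head //; congr (_ * _ + _).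
by rewrite big_seq_cond [RHS]big_seq_cond; apply: eq_bigr => y /andP[yt _]; apply: ea; rewrite inE yt orbT.
Qed.

Local Open Scope ring_scope.

Definition wv (p k : nat) := ((p.-1)`! %/ k)%N.

Lemma wvE p k : (0 < k < p)%N -> (k * wv p k = (p.-1)`!)%N.
Proof.
case/andP=> k0 kp; rewrite /wv mulnC divnK // dvdn_fact // k0 /=.
by rewrite -ltnS (ltn_predK kp).
Qed.

Lemma wv_pos p k : (0 < k < p)%N -> (0 < wv p k)%N.
Proof.
move=> kp; have := wvE kp; case: (wv p k) => //; rewrite muln0 => e.
by have := fact_gt0 p.-1; rewrite -e.
Qed.

Lemma Fp_eq0 p n : prime p -> ((n%:R : 'F_p) == 0) = (p %| n)%N.
Proof.
move=> pp; apply/eqP/idP => [e | /dvdnP[q ->]].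
  by have := val_Fp_nat pp n; rewrite e /= => /esym/eqP; rewrite -/(dvdn _ _).
by rewrite natrM pchar_Fp_0 // mulr0.
Qed.

Lemma Fp_fact p : prime p -> (((p.-1)`!)%:R : 'F_p) = -1.
Proof.
move=> pp; have := pp; rewrite (Wilson (prime_gt1 pp)) -(Fp_eq0 _ pp).
by rewrite -natr1 => /eqP e; apply/eqP; rewrite -subr_eq0 opprK e.
Qed.

Lemma Fp_k p k : prime p -> (0 < k < p)%N -> (k%:R : 'F_p) != 0.
Proof.
move=> pp /andP[k0 kp]; rewrite Fp_eq0 //; apply/negP=> /(dvdn_leq k0).
by rewrite leqNgt kp.
Qed.

Section Fp.
Variable p : nat.
Hypothesis pp : prime p.
Local Notation F := 'F_p.

Definition zv (k : nat) : F := (wv p k)%:R.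

Lemma zvE k : (0 < k < p)%N -> (k%:R : F) * zv k = -1.
Proof. by move=> kp; rewrite /zv -natrM wvE // Fp_fact. Qed.

Lemma zvE' k : (0 < k < p)%N -> zv k = - (k%:R : F)^-1.
Proof.
move=> kp; have k0 := Fp_k pp kp.
by apply: (mulfI k0); rewrite zvE // mulrN divff.
Qed.

Definition Vz := map zv (iota 1 p.-1).

Lemma in_iota1 k : (k \in iota 1 p.-1) = (0 < k < p)%N.
Proof. by rewrite mem_iota add1n (ltn_predK (prime_gt1 pp)). Qed.

Lemma Vz_uniq : uniq Vz.
Proof.
rewrite map_inj_in_uniq ?iota_uniq // => j k; rewrite !in_iota1 => jp kp.
rewrite !zvE' // => /oppr_inj /invr_inj e.
have := val_Fp_nat pp j; rewrite e val_Fp_nat // !modn_small //.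
- by case/andP: jp.
- by case/andP: kp.
Qed.

Lemma mem_Vz u : (u \in Vz) = (u != 0).
Proof.
apply/mapP/idP => [[k]|u0].
  rewrite in_iota1 => kp ->; rewrite zvE' // oppr_eq0 invr_eq0; exact: Fp_k.
have v0 : - u^-1 != 0 by rewrite oppr_eq0 invr_eq0.
set v := - u^-1 in v0.
have vp : (0 < (v : nat) < p)%N.
  apply/andP; split; last by apply: leq_trans (ltn_ord v) _; rewrite Fp_cast.
  by rewrite lt0n; apply: contra v0 => /eqP e; apply/eqP/val_inj.
exists (v : nat); first by rewrite in_iota1.
by rewrite zvE' // natr_Zp /v invrN opprK invrK.
Qed.

Lemma Vz_size : size Vz = p.-1.
Proof. by rewrite size_map size_iota. Qed.

Lemma fermat_Fp (u : F) : u != 0 -> u ^+ p.-1 = 1.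
Proof.
move=> u0; apply: (mulIf u0); rewrite mul1r -exprSr (ltn_predK (prime_gt1 pp)).
by have := expf_card u; rewrite card_Fp.
Qed.

Lemma exists_a m : ~~ (p.-1 %| m)%N -> exists a : F, a != 0 /\ a ^+ m != 1.
Proof.
move=> ndv.
have : has (p.-1).-primitive_root Vz.
  apply: has_prim_root; rewrite ?Vz_uniq ?Vz_size //.
    by rewrite -ltnS (ltn_predK (prime_gt1 pp)) prime_gt1.
  apply/allP=> u; rewrite mem_Vz => u0; rewrite unity_rootE fermat_Fp //.
case/hasP=> a aV ap; exists a; split; first by rewrite -mem_Vz.
by rewrite -(prim_order_dvd ap).
Qed.

Lemma shift_perm (a : F) : a != 0 -> perm_eq (map (fun u => a * u) Vz) Vz.
Proof.
move=> a0; apply: uniq_perm; rewrite ?(map_inj_uniq (mulfI a0)) ?Vz_uniq //.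
move=> u; rewrite mem_Vz; apply/mapP/idP => [[v] | u0].
  by rewrite mem_Vz => v0 ->; rewrite mulf_neq0.
exists (a^-1 * u); first by rewrite mem_Vz mulf_neq0 ?invr_eq0.
by rewrite mulrA divff // mul1r.
Qed.

Lemma Fp_vanish fam (l s : nat) (kap mu : F) : goodfam fam -> (0 < l)%N ->
  (~~ (p.-1 %| l * s)%N ->
    \sum_(t <- fam l p.-1) \prod_(x <- t) (kap * zv x ^+ s) = 0) /\
  (~~ (p.-1 %| l * s + 1)%N ->
    \sum_(t <- fam l p.-1) dsum (fun x => kap * zv x ^+ s) (fun x => mu * zv x ^+ s.+1) t = 0).
Proof.
case=> fsym [fsize _] l0.
pose Phi (v : F) : {poly F} := (kap * v ^+ s)%:P + (mu * v ^+ s.+1)%:P * 'X.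
have key a : a != 0 ->
    \sum_(t <- fam l p.-1) \prod_(x <- t) Phi (a * zv x) =
    \sum_(t <- fam l p.-1) \prod_(x <- t) Phi (zv x).
  move=> a0; apply: fsym.
  have -> : map (fun x => Phi (a * zv x)) (iota 1 p.-1) = map Phi (map (fun u => a * u) Vz).
    by rewrite /Vz; elim: (iota 1 p.-1) => //= x r ->.
  have -> : map (fun x => Phi (zv x)) (iota 1 p.-1) = map Phi Vz.
    by rewrite /Vz; elim: (iota 1 p.-1) => //= x r ->.
  by apply: perm_map; exact: shift_perm.
have h0 b t : (\prod_(x <- t) Phi (b * zv x))`_0 = \prod_(x <- t) (kap * (b * zv x) ^+ s).
  exact: (@coef_lin0' _ (fun x => kap * (b * zv x) ^+ s) (fun x => mu * (b * zv x) ^+ s.+1)).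
have h0' t : (\prod_(x <- t) Phi (zv x))`_0 = \prod_(x <- t) (kap * zv x ^+ s).
  exact: (@coef_lin0' _ (fun x => kap * zv x ^+ s) (fun x => mu * zv x ^+ s.+1)).
have h1 b t : (\prod_(x <- t) Phi (b * zv x))`_1 =
   dsum (fun x => kap * (b * zv x) ^+ s) (fun x => mu * (b * zv x) ^+ s.+1) t.
  exact: (@coef_lin1' _ (fun x => kap * (b * zv x) ^+ s) (fun x => mu * (b * zv x) ^+ s.+1)).
have h1' t : (\prod_(x <- t) Phi (zv x))`_1 =
   dsum (fun x => kap * zv x ^+ s) (fun x => mu * zv x ^+ s.+1) t.
  exact: (@coef_lin1' _ (fun x => kap * zv x ^+ s) (fun x => mu * zv x ^+ s.+1)).
split=> ndv; have [a [a0 an1]] := exists_a ndv.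
  have := congr1 (fun P : {poly F} => P`_0) (key a a0); rewrite /= !coef_sum.
  rewrite (eq_bigr _ (fun t _ => h0 a t)) (eq_bigr _ (fun t _ => h0' t)).
  rewrite big_seq [in RHS]big_seq.
  under eq_bigr => t tf.
    rewrite (eq_bigr (fun x => a ^+ s * (kap * zv x ^+ s))); last by move=> x _; rewrite exprMn; ring.
    rewrite prod_scale (fsize _ _ _ tf) -exprM mulnC.
  over.
  rewrite -big_distrr /= -big_seq => e.
  apply/eqP; move/eqP: e; rewrite -subr_eq0 -{2}(mul1r (\sum_(_ <- _) _)) -mulrBl.
  by rewrite mulf_eq0 subr_eq0 (negbTE an1).
have := congr1 (fun P : {poly F} => P`_1) (key a a0); rewrite /= !coef_sum.
rewrite (eq_bigr _ (fun t _ => h1 a t)) (eq_bigr _ (fun t _ => h1' t)).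
rewrite big_seq [in RHS]big_seq.
under eq_bigr => t tf.
  rewrite (@eq_dsum _ _ (fun x => a ^+ s * (kap * zv x ^+ s)) _
             (fun x => a ^+ s.+1 * (mu * zv x ^+ s.+1))); last 2 first.
  - by move=> x; rewrite exprMn; ring.
  - by move=> x; rewrite exprMn; ring.
  rewrite dsum_scale (fsize _ _ _ tf) -exprM -exprD.
over.
rewrite -big_distrr /= -big_seq => e.
have ee : ((l.-1 * s + s.+1) = l * s + 1)%N.
  by rewrite -{2}(prednK l0) mulSn; move: (l.-1 * s)%N => q; lia.
rewrite mulnC ee in e.
apply/eqP; move/eqP: e; rewrite -subr_eq0 -{2}(mul1r (\sum_(_ <- _) _)) -mulrBl.
by rewrite mulf_eq0 subr_eq0 (negbTE an1).
Qed.

End Fp.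

Local Open Scope ring_scope.

Lemma NF1 p x : prime p -> (0 < x < p)%N ->
  (x %| wv p (p - x))%N /\ (wv p (p - x) + wv p x = p * (wv p (p - x) %/ x))%N.
Proof.
move=> pp /andP[x0 xp].
have hx := @wvE p x (introT andP (conj x0 xp)).
have hpx : ((p - x) * wv p (p - x) = (p.-1)`!)%N.
  by apply: wvE; rewrite subn_gt0 xp /=; rewrite ltn_subrL x0 (ltn_trans x0 xp).
have e1 : (x * (wv p (p - x) + wv p x) = p * wv p (p - x))%N.
  by rewrite mulnDr hx -hpx -mulnDl subnKC // ltnW.
have dx : (x %| wv p (p - x))%N.
  have : (x %| p * wv p (p - x))%N by rewrite -e1 dvdn_mulr.
  rewrite Gauss_dvdr // coprime_sym prime_coprime //.
  by apply/negP=> /(dvdn_leq x0); rewrite leqNgt xp.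
split=> //; apply/eqP; rewrite -(eqn_pmul2l x0) e1.
by rewrite mulnCA [(x * _)%N]mulnC divnK.
Qed.

Lemma Fp_int_eq0 p (z : int) : prime p -> (z%:~R : 'F_p) = 0 -> (p %| z)%Z.
Proof.
move=> pp; case: z => n.
  by rewrite -pmulrn => /eqP; rewrite Fp_eq0.
rewrite NegzE intrN -pmulrn => /eqP; rewrite oppr_eq0 Fp_eq0 //.
Qed.

Lemma Z2_eq0 p n : (1 < p)%N -> ((n%:R : 'Z_(p ^ 2)) == 0) = (p ^ 2 %| n)%N.
Proof.
move=> p1; have p21 : (1 < p ^ 2)%N by rewrite -mulnn (leq_trans p1 (leq_pmulr p (ltnW p1))).
apply/eqP/idP => [e | /dvdnP[q ->]].
  by have := val_Zp_nat p21 n; rewrite e /= => /esym/eqP.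
by rewrite natrM pchar_Zp // mulr0.
Qed.

Lemma Z2_pp p : (1 < p)%N -> (p%:R : 'Z_(p ^ 2)) * p%:R = 0.
Proof.
move=> p1; have p21 : (1 < p ^ 2)%N by rewrite -mulnn (leq_trans p1 (leq_pmulr p (ltnW p1))).
by rewrite -natrM mulnn pchar_Zp.
Qed.

Lemma nil_binom (R : comRingType) (a e : R) n : e * e = 0 ->
  (a + e) ^+ n.+1 = a ^+ n.+1 + n.+1%:R * e * a ^+ n.
Proof.
move=> ee; elim: n => [|n IH]; first by rewrite !expr1 expr0 mulr1 mul1r.
rewrite exprS IH [a ^+ n.+2]exprS [a ^+ n.+1]exprS.
set b := a ^+ n.
have -> : (a + e) * (a * b + n.+1%:R * e * b) =
   a * (a * b) + (n.+1%:R + 1) * e * (a * b) + (e * e) * (n.+1%:R * b) by ring.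
by rewrite ee mul0r addr0 natr1.
Qed.

Local Open Scope ring_scope.

Definition Asum fam (p s l : nat) : nat :=
  (\sum_(t <- fam l p.-1) \prod_(x <- t) (wv p x ^ s))%N.

Lemma in_range p fam l t x : goodfam fam -> t \in fam l p.-1 -> x \in t ->
  (0 < x < p)%N.
Proof.
case=> _ [_ fr] tf xt; have := allP (fr _ _ _ tf) x xt; rewrite /rng.
case: p {tf} => [|p] //=; by case/andP=> h; rewrite leqNgt h.
Qed.

Lemma mainA_p fam (p s l : nat) : prime p -> goodfam fam -> (0 < l)%N ->
  ~~ (p.-1 %| l * s)%N -> (p %| Asum fam p s l)%N.
Proof.
move=> pp gf l0 ndv; rewrite -(Fp_eq0 _ pp) /Asum natr_sum.
apply/eqP; apply: etrans ((Fp_vanish pp s 1 0 gf l0).1 ndv).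
apply: eq_bigr => t _; rewrite natr_prod; apply: eq_bigr => x _.
by rewrite natrX mul1r.
Qed.

Lemma rev_perm p : (0 < p)%N ->
  perm_eq (map (fun x => p - x)%N (iota 1 p.-1)) (iota 1 p.-1).
Proof.
move=> p0; have inI k : (k \in iota 1 p.-1) = (0 < k < p)%N.
  by rewrite mem_iota add1n (ltn_predK p0).
apply: uniq_perm; rewrite ?iota_uniq //.
  rewrite map_inj_in_uniq ?iota_uniq // => x y; rewrite !inI => /andP[_ /ltnW xp] /andP[_ /ltnW yp] e.
  by rewrite -(subKn xp) e subKn.
move=> y; rewrite inI; apply/mapP/idP => [[x] | /andP[y0 yp]].
  rewrite inI => /andP[x0 xp] ->; rewrite subn_gt0 xp /=; rewrite ltn_subrL x0; lia.
exists (p - y)%N; last by rewrite subKn // ltnW.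
by rewrite inI subn_gt0 yp ltn_subrL y0; lia.
Qed.

Lemma mainA_p2 fam (p s l : nat) : prime p -> odd p -> (0 < s)%N -> goodfam fam -> (0 < l)%N ->
  odd (l * s) -> ~~ (p.-1 %| l * s)%N -> ~~ (p.-1 %| l * s + 1)%N ->
  (p ^ 2 %| Asum fam p s l)%N.
Proof.
move=> pp podd s0 gf l0 olds nd1 nd2.
have p1 := prime_gt1 pp; have p0 : (0 < p)%N by apply: ltnW.
have [fsym [fsize _]] := gf.
pose R2 := 'Z_(p ^ 2).
pose P : R2 := p%:R.
pose W x : R2 := (wv p x)%:R.
pose c x := (wv p (p - x) %/ x)%N.
pose al x : R2 := (- W x) ^+ s.
pose be x : R2 := s%:R * (c x)%:R * (- W x) ^+ s.-1.
pose A : R2 := (Asum fam p s l)%:R.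
have PP : P * P = 0 by apply: Z2_pp.
have E1 : A = \sum_(t <- fam l p.-1) \prod_(x <- t) (al x + P * be x).
  rewrite /A /Asum natr_sum; under eq_bigr do rewrite natr_prod.
  symmetry; apply: fsym.
  have -> : map (fun x => al x + P * be x) (iota 1 p.-1) =
            map (fun x => ((wv p x ^ s)%:R : R2)) (map (fun x => p - x)%N (iota 1 p.-1)).
    rewrite -map_comp; apply/eq_in_map => x; rewrite mem_iota add1n (ltn_predK p0) => xr /=.
    have [_ e] := NF1 pp xr.
    have eW : ((wv p (p - x))%:R : R2) = - W x + P * (c x)%:R.
      by apply: (addIr (W x)); rewrite /W -natrD e natrM /P; ring.
    rewrite natrX eW -(prednK s0) nil_binom; last by rewrite mulrACA PP mul0r.
    by rewrite /al /be (prednK s0); ring.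
  by apply: perm_map; apply: rev_perm.
pose X := \sum_(t <- fam l p.-1) dsum al be t.
have E2 : \sum_(t <- fam l p.-1) \prod_(x <- t) al x = - A.
  rewrite /A /Asum natr_sum -mulN1r big_distrr big_seq [RHS]big_seq; apply: eq_bigr => t tf.
  rewrite natr_prod (eq_bigr (fun x => (-1) ^+ s * (wv p x ^ s)%:R : R2)); last first.
    by move=> x _; rewrite /al [LHS]exprNn natrX.
  by rewrite prod_scale (fsize _ _ _ tf) -exprM mulnC -signr_odd olds expr1.
have E3 : A *+ 2 = P * X.
  have h : A = \sum_(t <- fam l p.-1) \prod_(x <- t) al x + P * X.
    rewrite {1}E1 /X big_distrr -big_split /=; apply: eq_bigr => t _; exact: eps_prod.
  rewrite E2 in h; rewrite mulr2n {1}h; ring.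
pose ai x : int := (- (wv p x)%:Z) ^+ s.
pose bi x : int := s%:Z * (c x)%:Z * (- (wv p x)%:Z) ^+ s.-1.
pose Xi := \sum_(t <- fam l p.-1) dsum ai bi t.
have EX : X = Xi%:~R.
  rewrite /Xi rmorph_sum; apply: eq_bigr => t _; rewrite (rmorph_dsum intr).
  by apply: eq_dsum => x; rewrite /ai /bi /al /be /W ?rmorphM !rmorphXn !rmorphN.
have dXi : (p %| Xi)%Z.
  apply: (Fp_int_eq0 pp).
  apply: etrans ((Fp_vanish pp s ((-1) ^+ s) (s%:R * (-1) ^+ s.-1) gf l0).2 nd2).
  rewrite /Xi rmorph_sum big_seq [RHS]big_seq; apply: eq_bigr => t tf.
  rewrite (rmorph_dsum intr); apply: eq_dsum_in => x xt; have xr := in_range gf tf xt.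
    by rewrite /ai rmorphXn rmorphN [LHS]exprNn.
  have cz : ((c x)%:R : 'F_p) = zv p x ^+ 2.
    have [dx _] := NF1 pp xr.
    have k0 := Fp_k pp xr.
    have pxr : (0 < p - x < p)%N by case/andP: xr => *; apply/andP; split; lia.
    have h1 : (x%:R : 'F_p) * zv p (p - x) = 1.
      have := zvE pp pxr; rewrite natrB ?pchar_Fp_0 //; last by case/andP: xr => _ /ltnW.
      by rewrite sub0r mulNr => /oppr_inj.
    have h2 := zvE pp xr.
    apply: (mulIf k0); apply: (mulIf k0).
    have -> : ((c x)%:R : 'F_p) * x%:R = zv p (p - x) by rewrite -natrM divnK.
    rewrite mulrC h1; transitivity ((x%:R * zv p x) ^+ 2); first by rewrite h2 sqrrN expr1n.
    ring.
  transitivity (s%:R * (zv p x ^+ 2) * (- zv p x) ^+ s.-1).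
    by rewrite -cz /bi !rmorphM rmorphXn rmorphN.
  rewrite [(- zv p x) ^+ _]exprNn -(prednK s0) /=; rewrite !exprS expr0; ring.
case/dvdzP: dXi => q eq.
have PX : P * X = 0.
  transitivity ((q%:~R : R2) * (P * P)); last by rewrite PP mulr0.
  by rewrite EX eq rmorphM mulrCA.
rewrite -E3 /A -mulrnA in PX.
move/eqP: PX; rewrite Z2_eq0 // mulnC Gauss_dvdr //.
by rewrite coprime_sym coprime2n oddX podd orbT.
Qed.

Local Open Scope ring_scope.

Lemma nth_nseq_ord (l s : nat) (i : 'I_(size (nseq l s))) : nth 0%N (nseq l s) i = s.
Proof. by rewrite nth_nseq; move: (ltn_ord i); rewrite [X in (_ < X)%N]size_nseq => ->. Qed.

Lemma mhsH_list (l s n : nat) :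
  mhsH (nseq l s) n = \sum_(t <- famL l n) \prod_(x <- t) ((x%:R : rat) ^- s).
Proof.
rewrite /mhsH.
under eq_bigr => k _ do under eq_bigr => i _ do rewrite nth_nseq_ord.
rewrite (@link _ ltn (famL (size (nseq l s)) n) (size (nseq l s)) n (fun x => (x%:R : rat) ^- s)).
- by rewrite size_nseq.
- exact: ltn_trans.
- exact: uniq_famL.
- exact: mem_famL.
Qed.

Lemma mhsS_list (l s n : nat) :
  mhsS (nseq l s) n = \sum_(t <- famM n l) \prod_(x <- t) ((x%:R : rat) ^- s).
Proof.
rewrite /mhsS.
under eq_bigr => k _ do under eq_bigr => i _ do rewrite nth_nseq_ord.
rewrite (@link _ leq (famM n (size (nseq l s))) (size (nseq l s)) n (fun x => (x%:R : rat) ^- s)).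
- by rewrite size_nseq.
- exact: leq_trans.
- exact: uniq_famM.
- exact: mem_famM.
Qed.

Lemma list_Asum fam (p s l : nat) : prime p -> goodfam fam ->
  \sum_(t <- fam l p.-1) \prod_(x <- t) ((x%:R : rat) ^- s) =
  (Asum fam p s l)%:R / (((p.-1)`! ^ (s * l))%N)%:R.
Proof.
move=> pp gf; have [_ [fsize _]] := gf.
rewrite /Asum natr_sum mulr_suml big_seq [RHS]big_seq; apply: eq_bigr => t tf.
rewrite natr_prod [LHS]big_seq.
rewrite [LHS](eq_bigr (fun x => ((((p.-1)`! ^ s)%N)%:R)^-1 * ((wv p x ^ s)%N)%:R)); last first.
  move=> x xt; have xr := in_range gf tf xt.
  have x0 : (x%:R : rat) != 0 by rewrite pnatr_eq0; case/andP: xr => /lt0n_neq0.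
  have w0 : ((wv p x)%:R : rat) != 0 by rewrite pnatr_eq0 -lt0n wv_pos.
  rewrite -(wvE xr) expnMn !natrM !natrX invfM -mulrA mulVf ?expf_neq0 //.
  by rewrite mulr1.
rewrite -big_seq prod_scale (fsize _ _ _ tf) mulrC; congr (_ * _).
by rewrite exprVn -natrX -expnM.
Qed.

Lemma cong_from (x : rat) (A p s l e : nat) : prime p ->
  x = A%:R / (((p.-1)`! ^ (s * l))%N)%:R -> (p ^ e %| A)%N -> cong0_mod x p e.
Proof.
move=> pp -> dA; exists (A%:Z), ((p.-1)`! ^ (s * l))%N; split.
- by rewrite expn_gt0 fact_gt0.
- apply: coprimeXl; rewrite coprime_sym prime_coprime //; apply/negP => pN.
  have := pp; rewrite (Wilson (prime_gt1 pp)) -addn1 dvdn_addr // dvdn1 => /eqP p1.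
  by have := prime_gt1 pp; rewrite p1.
- by rewrite dvdzE.
- by [].
Qed.

Lemma main_fam fam (mhs : rat) (s l p e : nat) : prime p -> odd p -> (0 < s)%N -> (0 < l)%N ->
  goodfam fam ->
  mhs = \sum_(t <- fam l p.-1) \prod_(x <- t) ((x%:R : rat) ^- s) ->
  ~~ (p.-1 %| l * s)%N -> ~~ (p.-1 %| l * s + 1)%N ->
  e = par (l * s - 1) \/ e = 1%N ->
  cong0_mod mhs p e.
Proof.
move=> pp podd s0 l0 gf -> nd1 nd2 he.
apply: (cong_from pp (list_Asum s l pp gf)).
have ls0 : (0 < l * s)%N by rewrite muln_gt0 l0 s0.
have Hp := mainA_p pp gf l0 nd1.
case: he => ->; last by rewrite expn1.
rewrite /par oddB // addbT.
case: (boolP (odd (l * s))) => ols /=.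
  exact: mainA_p2.
by rewrite expn1.
Qed.

Local Close Scope ring_scope.

Theorem theorem2p14 (s l p : nat) :
  (0 < s)%N -> (0 < l)%N -> prime p -> odd p ->
  ((l + 2 <= p)%N ->
   ~~ (p.-1 %| s * l)%N ->
   (forall k : nat, (1 <= k <= l)%N -> ~~ (p.-1 %| k * s + 1)%N) ->
   cong0_mod (mhsH (nseq l s) p.-1) p (par (l * s - 1)) /\
   cong0_mod (mhsS (nseq l s) p.-1) p (par (l * s - 1)))
  /\
  ((l * s + 3 <= p)%N ->
   [/\ cong0_mod (mhsH (nseq l s) p.-1) p (par (l * s - 1)),
       cong0_mod (mhsS (nseq l s) p.-1) p (par (l * s - 1)) &
       cong0_mod (mhsH (nseq l s) p.-1) p 1]).
Proof.
move=> s0 l0 pp podd.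
have HH e : ~~ (p.-1 %| l * s)%N -> ~~ (p.-1 %| l * s + 1)%N ->
    e = par (l * s - 1) \/ e = 1%N -> cong0_mod (mhsH (nseq l s) p.-1) p e.
  move=> n1 n2 he; apply: (main_fam pp podd s0 l0 goodL _ n1 n2 he).
  exact: mhsH_list.
have HS e : ~~ (p.-1 %| l * s)%N -> ~~ (p.-1 %| l * s + 1)%N ->
    e = par (l * s - 1) \/ e = 1%N -> cong0_mod (mhsS (nseq l s) p.-1) p e.
  move=> n1 n2 he; apply: (main_fam pp podd s0 l0 goodM _ n1 n2 he).
  exact: mhsS_list.
split.
  move=> _ n1 n2; have n1' : ~~ (p.-1 %| l * s)%N by rewrite mulnC.
  have n2' : ~~ (p.-1 %| l * s + 1)%N by apply: n2; rewrite leqnn andbT.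
  by split; [apply: HH | apply: HS] => //; left.
move=> hp.
have ls0 : (0 < l * s)%N by rewrite muln_gt0 l0 s0.
have nd m : (0 < m)%N -> (m < p.-1)%N -> ~~ (p.-1 %| m)%N.
  by move=> m0 mp; apply/negP => /(dvdn_leq m0); lia.
have n1 : ~~ (p.-1 %| l * s)%N.
  apply: nd => //; move: ls0 hp; move: (l * s)%N => q; lia.
have n2 : ~~ (p.-1 %| l * s + 1)%N.
  apply: nd; first by rewrite addn1.
  move: ls0 hp; move: (l * s)%N => q; lia.
split; [apply: HH | apply: HS | apply: HH] => //; by [left | right].
Qed.
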